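(* Let $q$ be an odd prime power, let $d \geq 1$ and $n \geq 2$ be integers, and let $M_n(\mathbb{F}_q)$ denote the set of $n \times n$ matrices with entries in the finite field $\mathbb{F}_q$. Let $\mathcal{A}_1,\dots,\mathcal{A}_d,\mathcal{B}_1,\dots,\mathcal{B}_d,\mathcal{E},\mathcal{F} \subset M_n(\mathbb{F}_q)$, and let $N$ be the number of tuples $(A_1,\dots,A_d,B_1,\dots,B_d,E,F)$ with $A_i \in \mathcal{A}_i$, $B_i \in \mathcal{B}_i$ ($1 \le i \le d$), $E \in \mathcal{E}$, $F \in \mathcal{F}$ satisfying \[ A_1B_1 + A_2B_2 + \dots + A_dB_d = E + F. \] Then \[ \left| N - \frac{|\mathcal{E}||\mathcal{F}|\prod_{i=1}^d |\mathcal{A}_i||\mathcal{B}_i|}{q^{n^2}} \right| \ll q^{dn^2 - (d-1)n/2 - 1/2} \sqrt{|\mathcal{E}||\mathcal{F}|\prod_{i=1}^d|\mathcal{A}_i||\mathcal{B}_i|}. \]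
   Context: The notation $X \ll Y$ means $X \le C\,Y$ for some positive constant $C$ depending only on $d$ and $n$ (not on $q$ or on the sets). *)

(* Defs.v *)
From HB Require Import structures.
From mathcomp Require Import all_boot all_order all_algebra all_field.
Set Implicit Arguments. Unset Strict Implicit. Unset Printing Implicit Defensive.
Import Order.TTheory GRing.Theory Num.Theory.
Local Open Scope ring_scope.

(* The tuples (A_1..A_d, B_1..B_d, E, F) of n x n matrices over F. *)
Definition sol_tuple (F : finFieldType) (d n : nat) : finType :=
  ({ffun 'I_d -> 'M[F]_n} * {ffun 'I_d -> 'M[F]_n} * 'M[F]_n * 'M[F]_n)%type.

Definition count_sol (F : finFieldType) (d n : nat)
  (As Bs : 'I_d -> {set 'M[F]_n}) (Es Fs : {set 'M[F]_n}) : nat :=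
  #|[set x : sol_tuple F d n |
      [&& [forall i, x.1.1.1 i \in As i],
          [forall i, x.1.1.2 i \in Bs i],
          x.1.2 \in Es, x.2 \in Fs &
          (\sum_(i < d) (x.1.1.1 i *m x.1.1.2 i) == x.1.2 + x.2)]]|.

(* Main.v *)
Require Import Defs.
From HB Require Import structures.
From mathcomp Require Import all_boot all_order all_algebra all_field.
Import Order.TTheory GRing.Theory Num.Theory.
Local Open Scope ring_scope.
From mathcomp Require Import ring zify.
Lemma exists_char (F : finFieldType) : exists psi : F -> algC,
  [/\ (forall x y, psi (x + y) = psi x * psi y), psi 0 = 1,
      (forall x, `|psi x| = 1) & exists a, psi a != 1].
Proof.
have [p pr_p chF] := finPcharP F.
have [f lin_f bij_f] := pprimeChar_vectAxiom chF.
have fD (x y : F) : f (x + y) = f x + f y.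
  by have := lin_f 1 x y; rewrite scale1r => ->; rewrite scale1r.
have f0 : f 0 = 0.
  by apply: (addrI (f 0)); rewrite -fD !addr0.
have f1 : f 1 != 0.
  apply/eqP => H; have := bij_inj bij_f; move=> /(_ 1 0); rewrite H f0 => /(_ erefl) /eqP.
  by rewrite oner_eq0.
have [j fj] : exists j, f 1 0 j != 0.
  apply/existsP; apply: contraR f1 => /existsPn H; apply/eqP/rowP => j.
  by rewrite mxE; apply/eqP; move: (H j); rewrite negbK.
pose k := #|'F_p|.
have k_gt0 : (0 < k)%N by rewrite /k card_Fp // prime_gt0.
have [w pw] := C_prim_root_exists k_gt0.
pose lam (x : F) : 'F_p := f x 0 j.
have valD (a b : 'F_p) : val (a + b) = ((val a + val b) %% k)%N by rewrite /k card_ord.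
exists (fun x => w ^+ val (lam x)); split.
- move=> x y; rewrite /lam fD mxE valD (prim_expr_mod pw) exprD //.
- by rewrite /lam f0 mxE.
- move=> x; rewrite normrX.
  have : `|w| ^+ k == 1 by rewrite -normrX (prim_expr_order pw) normr1.
  by rewrite pexpr_eq1 // => /eqP ->; rewrite expr1n.
- exists (1%R : F); rewrite -(prim_order_dvd pw); apply/negP => /dvdn_leq.
  have lt : (val (lam (1%R : F)) < k)%N by rewrite /k; case: (lam _) => i /= ; rewrite card_ord.
  have ne : (0 < val (lam (1%R : F)))%N by rewrite lt0n; apply: contra fj => /eqP H; apply/eqP/val_inj.
  by move=> /(_ ne); rewrite leqNgt lt.
Qed.
Lemma kernel_bound (F : finFieldType) n (M : 'M[F]_n) : M != 0 ->
  (#|[set Y : 'M[F]_n | Y *m M == 0%R]| * #|F| ^ n <= #|F| ^ (n * n))%N.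
Proof.
move=> Mn0.
have : [exists i, exists j, M i j != 0].
  apply: contraR Mn0 => /existsPn H; apply/eqP/matrixP => i j; rewrite mxE.
  by move/existsPn: (H i) => /(_ j); rewrite negbK => /eqP.
case/existsP => i /existsP [j Mij].
pose c : 'cV[F]_n := M *m delta_mx j 0.
pose w : 'rV[F]_n := (M i j)^-1 *: delta_mx 0 i.
have wc : w *m c = 1%:M.
  apply/matrixP => a b; rewrite !ord1 -scalemxAl mulmxA -rowE -colE !mxE eqxx.
  by rewrite mulVf.
pose ZC := [set Y : 'M[F]_n | Y *m c == 0].
have sub1 : [set Y : 'M[F]_n | Y *m M == 0] \subset ZC.
  apply/subsetP => Y; rewrite !inE /c mulmxA => /eqP ->; by rewrite mul0mx.
pose Psi (p : 'M[F]_n * 'cV[F]_n) := p.1 + p.2 *m w.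
have Psic p : p \in setX ZC [set: 'cV[F]_n] -> Psi p *m c = p.2.
  case: p => Y v; rewrite !inE andbT /= => /eqP Yc.
  by rewrite /Psi /= mulmxDl Yc add0r -mulmxA wc mulmx1.
have Psi_inj : {in setX ZC [set: 'cV[F]_n] &, injective Psi}.
  move=> p p' Hp Hp' e; have e2 : p.2 = p'.2 by rewrite -(Psic p Hp) -(Psic p' Hp') e.
  move: e; rewrite /Psi e2 => /addIr e1.
  by case: p p' e1 e2 {Hp Hp'} => [? ?] [? ?] /= -> ->.
have := max_card (Psi @: setX ZC [set: 'cV[F]_n]).
rewrite card_in_imset // cardsX cardsT !card_mx muln1.
move=> H; apply: leq_trans H; rewrite leq_mul2r; apply/orP; right.
exact: subset_leq_card sub1.
Qed.
Lemma CS (R : numDomainType) (I : finType) (P : pred I) (a b : I -> R) :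
  (forall i, a i \is Num.real) -> (forall i, b i \is Num.real) ->
  (\sum_(i | P i) a i * b i) ^+ 2 <=
  (\sum_(i | P i) a i ^+ 2) * (\sum_(i | P i) b i ^+ 2).
Proof.
move=> ra rb.
have H : \sum_(i | P i) \sum_(j | P j) (a i * b j - a j * b i) ^+ 2 =
  2 * ((\sum_(i | P i) a i ^+ 2) * (\sum_(i | P i) b i ^+ 2)
       - (\sum_(i | P i) a i * b i) ^+ 2).
  have e i j : (a i * b j - a j * b i) ^+ 2 =
     a i ^+ 2 * b j ^+ 2 + b i ^+ 2 * a j ^+ 2 - (2 * (a i * b i)) * (a j * b j).
    by ring.
  under eq_bigr do under eq_bigr do rewrite e.
  under eq_bigr do rewrite sumrB big_split /= -!mulr_sumr.
  rewrite sumrB big_split /= -!mulr_suml -mulr_sumr.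
  ring.
have : 0 <= \sum_(i | P i) \sum_(j | P j) (a i * b j - a j * b i) ^+ 2.
  apply: sumr_ge0 => i _; apply: sumr_ge0 => j _.
  by rewrite -realEsqr realB ?realM.
by rewrite H pmulr_rge0 // subr_ge0.
Qed.
Section Core.
Variables (F : finFieldType) (psi : F -> algC).
Hypothesis psiD : forall x y, psi (x + y) = psi x * psi y.
Hypothesis psi0 : psi 0 = 1.
Hypothesis psiN1 : forall x, `|psi x| = 1.
Variable a0 : F.
Hypothesis psia0 : psi a0 != 1.
Variable n : nat.
Local Notation V := 'M[F]_n.
Local Notation Q := ((#|F| ^ (n * n))%:R : algC).

Lemma psi_sum I r P (g : I -> F) :
  psi (\sum_(i <- r | P i) g i) = \prod_(i <- r | P i) psi (g i).
Proof. exact: (big_morph psi psiD psi0). Qed.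

Lemma psiN x : psi (- x) = (psi x)^*.
Proof.
have h : psi x * psi (- x) = 1 by rewrite -psiD subrr psi0.
have h2 : psi x * (psi x)^* = 1 by rewrite -normCK psiN1 expr1n.
have nz : psi x != 0 by rewrite -normr_eq0 psiN1 oner_eq0.
by apply: (mulfI nz); rewrite h h2.
Qed.

Lemma psiB x y : psi (x - y) = psi x * (psi y)^*.
Proof. by rewrite psiD psiN. Qed.

Lemma tr_delta (W : V) i j : \tr (W *m delta_mx j i) = W i j.
Proof.
rewrite /mxtrace (bigD1 i) //= big1 => [|k ki].
  rewrite addr0 mxE (bigD1 j) //= big1 => [|l lj]; first by rewrite mxE !eqxx mulr1 addr0.
  by rewrite mxE (negbTE lj) mulr0.
by rewrite mxE big1 // => l _; rewrite mxE (negbTE ki) andbF mulr0.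
Qed.

Lemma orth (W : V) : \sum_(X : V) psi (\tr (W *m X)) = (W == 0)%:R * Q.
Proof.
have [->|Wn0] := eqVneq W 0.
  rewrite mul1r; under eq_bigr do rewrite mul0mx mxtrace0 psi0.
  by rewrite sumr_const; congr (_ %:R); exact: card_mx.
rewrite mul0r.
have : [exists i, exists j, W i j != 0].
  apply: contraR Wn0 => /existsPn H; apply/eqP/matrixP => i j; rewrite mxE.
  by move/existsPn: (H i) => /(_ j); rewrite negbK => /eqP.
case/existsP => i /existsP [j Wij].
pose X0 := (a0 / W i j) *: delta_mx j i.
have trX0 : \tr (W *m X0) = a0.
  by rewrite /X0 -scalemxAr mxtraceZ tr_delta divfK.
set S := \sum_X _.
have : S = psi a0 * S.
  rewrite /S {1}(reindex_inj (addIr X0)) /= mulr_sumr; apply: eq_bigr => X _.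
  by rewrite mulmxDr mxtraceD psiD trX0 mulrC.
move/eqP; rewrite -{1}(mul1r S) -subr_eq0 -mulrBl mulf_eq0 subr_eq0 eq_sym.
by rewrite (negbTE psia0) /= => /eqP.
Qed.


Definition Sf (A B : {set V}) (M : V) :=
  \sum_(a in A) \sum_(b in B) psi (\tr (M *m (a *m b))).

Lemma sum_indic (M : V) : \sum_(Y : V) ((Y *m M == 0)%:R : algC)
   = #|[set Y : V | Y *m M == 0]|%:R.
Proof. by rewrite -sum1dep_card natr_sum [RHS]big_mkcond; apply: eq_bigr => Y _; case: (_ == _). Qed.

Lemma Sf_expand (A B : {set V}) (M : V) :
  \sum_(a : V) `|\sum_(b in B) psi (\tr (M *m (a *m b)))| ^+ 2 =
  Q * \sum_(b in B) \sum_(b' in B) (((b - b') *m M == 0)%:R : algC).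
Proof.
under eq_bigr => a _ do rewrite normCK rmorph_sum big_distrlr /=.
rewrite exchange_big /= mulr_sumr; apply: eq_bigr => b _.
rewrite exchange_big /= mulr_sumr; apply: eq_bigr => b' _.
have e a : psi (\tr (M *m (a *m b))) * (psi (\tr (M *m (a *m b'))))^* =
           psi (\tr (((b - b') *m M) *m a)).
  rewrite -psiB -raddfB /= mulmxBl -mulmxBr -mulmxBr mxtrace_mulC.
  by rewrite -mulmxA mxtrace_mulC mulmxBl.
under eq_bigr do rewrite e.
by rewrite orth mulrC.
Qed.

Lemma sub_kernel_bound (B : {set V}) (M : V) : M != 0 ->
  ((\sum_(b in B) \sum_(b' in B) ((b - b') *m M == 0%R : nat)) * #|F| ^ n
     <= #|B| * #|F| ^ (n * n))%N.
Proof.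
move=> Mn0; have k := @kernel_bound F n M Mn0.
rewrite big_distrl /=.
apply: leq_trans (_ : \sum_(b in B) #|F| ^ (n * n) <= _)%N; last by rewrite sum_nat_const.
apply: leq_sum => b _; apply: (leq_trans _ k); rewrite leq_mul2r; apply/orP; right.
have -> : #|[set Y : V | Y *m M == 0%R]| = (\sum_(b' : V) ((b - b') *m M == 0%R : nat))%N.
  rewrite (reindex_inj (subrI b)) /= -sum1dep_card big_mkcond /=.
  by apply: eq_bigr => Y _; rewrite subKr; case: (_ == _).
by rewrite [X in (_ <= X)%N](bigID (mem B)) /= leq_addr.
Qed.

Lemma Sf_bound (A B : {set V}) (M : V) : M != 0 ->
  `|Sf A B M| ^+ 2 * (#|F| ^ n)%:R <= (#|A| * #|B|)%:R * Q ^+ 2.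
Proof.
move=> Mn0.
set T := fun a => \sum_(b in B) psi (\tr (M *m (a *m b))).
have h1 : `|Sf A B M| <= \sum_(a in A) `|T a| by exact: ler_norm_sum.
have h1' : `|Sf A B M| ^+ 2 <= (\sum_(a in A) `|T a|) ^+ 2.
  by rewrite ler_sqr ?nnegrE ?normr_ge0 ?sumr_ge0.
have h2 : (\sum_(a in A) `|T a|) ^+ 2 <= #|A|%:R * \sum_(a in A) `|T a| ^+ 2.
  have := @CS _ _ (fun a => a \in A) (fun _ => 1) (fun a => `|T a|)
              (fun _ => real1 _) (fun _ => normr_real _).
  by under eq_bigr do rewrite mul1r; rewrite expr1n sumr_const.
have h3 : \sum_(a in A) `|T a| ^+ 2 <= \sum_a `|T a| ^+ 2.
  rewrite [X in _ <= X](bigID (mem A)) /= lerDl sumr_ge0 // => a _.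
  exact: exprn_ge0 (normr_ge0 _).
have h4 := Sf_expand A B M.
have h5 := sub_kernel_bound B M Mn0.
have zpos : 0 < (#|F| ^ n)%:R :> algC by rewrite ltr0n expn_gt0 (ltnW (finNzRing_gt1 F)).
apply: le_trans (_ : #|A|%:R * (Q * (\sum_(b in B) \sum_(b' in B)
        ((b - b') *m M == 0%R : nat))%:R) * (#|F| ^ n)%:R <= _).
  rewrite ler_pM2r //; apply: le_trans h1' _; apply: le_trans h2 _.
  rewrite ler_wpM2l // natr_sum; under [X in _ <= _ * X]eq_bigr do rewrite natr_sum.
  by rewrite -h4.
rewrite -natrX -!natrM ler_nat.
move: h5; set S := (\sum_(b in B) _)%N; set z := (#|F| ^ n)%N; set q := (#|F| ^ (n * n))%N.
move=> h5.
rewrite (_ : (#|A| * (q * S) * z = #|A| * q * (S * z))%N); last by ring.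
apply: leq_trans (leq_mul (leqnn _) h5) _.
by apply: eq_leq; ring.
Qed.

Definition Hf (E : {set V}) (M : V) := \sum_(x in E) psi (- \tr (M *m x)).

Lemma parseval (E : {set V}) : \sum_(M : V) `|Hf E M| ^+ 2 = Q * #|E|%:R.
Proof.
under eq_bigr => M _ do rewrite normCK rmorph_sum big_distrlr /=.
rewrite exchange_big /=.
transitivity (\sum_(x in E) Q); last by rewrite sumr_const mulr_natr.
apply: eq_bigr => x xE; rewrite exchange_big /=.
have e y M : psi (- \tr (M *m x)) * (psi (- \tr (M *m y)))^* =
             psi (\tr ((y - x) *m M)).
  rewrite -psiB; congr psi; rewrite mulmxBl raddfB /= !(mxtrace_mulC _ M).
  by rewrite opprK addrC.
under eq_bigr do under eq_bigr do rewrite e.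
under eq_bigr do rewrite orth.
rewrite (bigD1 x) //= subrr eqxx mul1r big1 ?addr0 // => y /andP [_ yx].
by rewrite subr_eq0 (negbTE yx) mul0r.
Qed.

Lemma sum_ind (T : finType) (E : {pred T}) (g : T -> algC) :
  \sum_(x in E) g x = \sum_x (x \in E)%:R * g x.
Proof. by rewrite big_mkcond; apply: eq_bigr => x _; case: (x \in E); rewrite ?mul1r ?mul0r. Qed.

Lemma pb (T1 T2 : finType) (G : T1 * T2 -> algC) :
  \sum_x G x = \sum_a \sum_b G (a, b).
Proof. by rewrite pair_big; apply: eq_bigr => [[a b]]. Qed.

Lemma prod_Sf d (As Bs : 'I_d -> {set V}) (M : V) :
  \prod_(i < d) Sf (As i) (Bs i) M =
  \sum_(fa : {ffun 'I_d -> V}) \sum_(fb : {ffun 'I_d -> V})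
     ([forall i, fa i \in As i] && [forall i, fb i \in Bs i])%:R *
     psi (\tr (M *m \sum_i (fa i *m fb i))).
Proof.
rewrite /Sf (bigA_distr_big_dep (fun i (a : V) => a \in As i)).
under eq_bigr => fa _ do rewrite (bigA_distr_big_dep (fun i (b : V) => b \in Bs i)).
rewrite big_mkcond; apply: eq_bigr => fa _.
have famE (X : 'I_d -> {set V}) (f : {ffun 'I_d -> V}) :
   (f \in family (fun i (a : V) => a \in X i)) = [forall i, f i \in X i].
  by apply/idP/idP => [/familyP H | /forallP H]; [apply/forallP | apply/familyP].
rewrite famE; case: (boolP [forall i, fa i \in As i]) => /= Ha; last first.
  by rewrite big1 // => fb _; rewrite mul0r.
rewrite big_mkcond; apply: eq_bigr => fb _; rewrite famE.
case: (boolP [forall i, fb i \in Bs i]) => /= Hb; last by rewrite mul0r.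
by rewrite mul1r mulmx_sumr raddf_sum psi_sum.
Qed.


Lemma pb4 d (G : sol_tuple F d n -> algC) :
  \sum_x G x = \sum_(fa : {ffun 'I_d -> V}) \sum_(fb : {ffun 'I_d -> V})
     \sum_(e : V) \sum_(f : V) G (((fa, fb), e), f).
Proof.
rewrite (@pb _ _ G) (@pb _ _ (fun p => \sum_f G (p, f))).
by rewrite (@pb _ _ (fun q => \sum_e \sum_f G ((q, e), f))).
Qed.

Lemma fourier d (As Bs : 'I_d -> {set V}) (Es Fs : {set V}) :
  Q * (count_sol As Bs Es Fs)%:R =
  \sum_(M : V) (\prod_(i < d) Sf (As i) (Bs i) M) * Hf Es M * Hf Fs M.
Proof.
pose memx (x : sol_tuple F d n) := [&& [forall i, x.1.1.1 i \in As i],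
          [forall i, x.1.1.2 i \in Bs i], x.1.2 \in Es & x.2 \in Fs].
pose Sx (x : sol_tuple F d n) := \sum_(i < d) (x.1.1.1 i *m x.1.1.2 i).
have eR M : (\prod_(i < d) Sf (As i) (Bs i) M) * Hf Es M * Hf Fs M =
   \sum_(x : sol_tuple F d n) (memx x)%:R * psi (\tr (M *m (Sx x - x.1.2 - x.2))).
  rewrite prod_Sf /Hf (@sum_ind _ Es) (@sum_ind _ Fs) [RHS]pb4 mulr_suml mulr_suml /=.
  apply: eq_bigr => fa _; rewrite mulr_suml mulr_suml /=.
  apply: eq_bigr => fb _; rewrite -mulrA mulr_suml mulr_sumr.
  apply: eq_bigr => e _; rewrite mulr_sumr mulr_sumr.
  apply: eq_bigr => f _.
  rewrite /memx /Sx /= !mulmxBr !raddfB /= !psiB -!psiN.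
  rewrite -!mulnb !natrM mulmx_sumr raddf_sum /=.
  ring.
rewrite /count_sol -sum1dep_card natr_sum big_mkcond /= mulr_sumr.
under [RHS]eq_bigr do rewrite eR.
rewrite exchange_big /=; apply: eq_bigr => x _.
rewrite -mulr_sumr; under [X in _ = _ * X]eq_bigr do rewrite mxtrace_mulC; rewrite orth.
have -> : (Sx x - x.1.2 - x.2 == 0) = (Sx x == x.1.2 + x.2).
  by rewrite -addrA -opprD subr_eq0.
rewrite (_ : (if _ then 1 else 0) = ((memx x) && (Sx x == x.1.2 + x.2))%:R :> algC); last first.
  have gen (b : bool) : (if b then 1 else 0) = (b : nat)%:R :> algC by case: b.
  by rewrite /memx /Sx /= -!andbA; exact: gen.
by rewrite -mulnb natrM; ring.
Qed.

Lemma Sf0 (A B : {set V}) : Sf A B 0 = (#|A| * #|B|)%:R.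
Proof.
rewrite /Sf; under eq_bigr do under eq_bigr do rewrite mul0mx mxtrace0 psi0.
by rewrite sumr_const sumr_const -mulrnA mulnC.
Qed.

Lemma Hf0 (E : {set V}) : Hf E 0 = #|E|%:R.
Proof.
by rewrite /Hf; under eq_bigr do rewrite mul0mx mxtrace0 oppr0 psi0; rewrite sumr_const.
Qed.

Lemma core d (As Bs : 'I_d -> {set V}) (Es Fs : {set V}) (P : nat) :
  P = (#|Es| * #|Fs| * \prod_(i < d) (#|As i| * #|Bs i|))%N ->
  (Q * (count_sol As Bs Es Fs)%:R - P%:R) ^+ 2 * ((#|F| ^ n) ^ d)%:R
    <= P%:R * Q ^+ (2 * d + 2).
Proof.
move=> hP.
set z : algC := (#|F| ^ n)%:R.
have z0 : 0 <= z by rewrite ler0n.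
set U := fun M => \prod_(i < d) Sf (As i) (Bs i) M.
set X := \sum_(M | M != 0) U M * Hf Es M * Hf Fs M.
have eX : Q * (count_sol As Bs Es Fs)%:R - P%:R = X.
  rewrite fourier (bigD1 0) //= /U.
  rewrite (_ : \prod_(i < d) Sf (As i) (Bs i) 0 * Hf Es 0 * Hf Fs 0 = P%:R).
    by rewrite addrC addrK.
  rewrite hP !natrM natr_prod Hf0 Hf0; under [X in X * _ * _ = _]eq_bigr do rewrite Sf0.
  ring.
rewrite eX.
pose a M := `|U M| * `|Hf Es M|.
pose b M := `|Hf Fs M|.
have ra M : a M \is Num.real by rewrite realM ?normr_real.
have rb M : b M \is Num.real by rewrite normr_real.
have hX : `|X| <= \sum_(M | M != 0) a M * b M.
  apply: le_trans (ler_norm_sum _ _ _) _; apply: ler_sum => M _.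
  by rewrite !normrM.
have hX2 : X ^+ 2 <= (\sum_(M | M != 0) a M ^+ 2) * (\sum_(M | M != 0) b M ^+ 2).
  apply: (le_trans _ (@CS _ _ (fun M => M != 0) a b ra rb)).
  have rX : X \is Num.real by rewrite -eX rpredB ?rpredM ?realn.
  rewrite -[X ^+ 2](real_normK rX) ler_sqr ?nnegrE ?normr_ge0 ?hX //.
  by apply: sumr_ge0 => M _; rewrite /a /b !mulr_ge0 ?normr_ge0.
have hb : \sum_(M | M != 0) b M ^+ 2 <= Q * #|Fs|%:R.
  rewrite -parseval [X in _ <= X](bigD1 0) //= lerDr.
  exact: exprn_ge0 (normr_ge0 _).
have hU M : M != 0 -> `|U M| ^+ 2 * z ^+ d <=
     (\prod_(i < d) (#|As i| * #|Bs i|)%N)%:R * Q ^+ (2 * d).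
  move=> Mn0.
  have zd : z ^+ d = \prod_(i < d) z by rewrite prodr_const card_ord.
  have Qd : Q ^+ (2 * d) = \prod_(i < d) Q ^+ 2 by rewrite prodr_const card_ord -exprM.
  rewrite /U normr_prod -prodrXl zd Qd -big_split /=.
  rewrite natr_prod -big_split /=.
  apply: ler_prod => i _; rewrite mulr_ge0 ?exprn_ge0 ?normr_ge0 //=.
  exact: Sf_bound.
have ha : \sum_(M | M != 0) a M ^+ 2 * z ^+ d <=
     (\prod_(i < d) (#|As i| * #|Bs i|)%N)%:R * Q ^+ (2 * d) * (Q * #|Es|%:R).
  rewrite -parseval mulr_sumr [X in _ <= X](bigD1 0) //=.
  apply: le_trans (_ : _ <= \sum_(M | M != 0) 
     (\prod_(i < d) (#|As i| * #|Bs i|)%N)%:R * Q ^+ (2 * d) * `|Hf Es M| ^+ 2) _.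
    apply: ler_sum => M Mn0; rewrite /a exprMn mulrAC.
    by rewrite ler_wpM2r ?exprn_ge0 ?normr_ge0 ?hU.
  rewrite lerDr mulr_ge0 ?exprn_ge0 ?normr_ge0 ?ler0n //.
  by rewrite mulr_ge0 ?exprn_ge0 ?ler0n.
rewrite natrX.
apply: (le_trans (_ : _ <= (\sum_(M | M != 0) a M ^+ 2) *
          (\sum_(M | M != 0) b M ^+ 2) * z ^+ d)).
  by rewrite ler_wpM2r ?exprn_ge0.
rewrite mulrAC mulr_suml.
apply: le_trans (ler_pM _ _ ha hb) _.
- by apply: sumr_ge0 => M _; rewrite mulr_ge0 ?exprn_ge0 // /a mulr_ge0 ?normr_ge0.
- by apply: sumr_ge0 => M _; rewrite exprn_ge0 ?normr_ge0.
rewrite hP !natrM exprD le_eqVlt; apply/orP; left; apply/eqP; ring.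
Qed.
End Core.

Lemma natz_cast (R : pzRingType) (n : nat) : (n%:Z)%:~R = n%:R :> R.
Proof. by []. Qed.

Lemma transfer (C : numDomainType) (R : numDomainType) (a b c d : nat) :
  ((a%:R - b%:R : C) ^+ 2 * c%:R <= d%:R) ->
  ((a%:R - b%:R : R) ^+ 2 * c%:R <= d%:R).
Proof.
have e (K : numDomainType) : ((a%:R - b%:R : K) ^+ 2 * c%:R) = ((a%:Z - b%:Z) ^+ 2 * c%:Z)%:~R.
  by rewrite rmorphM rmorphXn rmorphB /=.
by rewrite e -(natz_cast C d) ler_int => H; rewrite e -(natz_cast R d) ler_int.
Qed.

Theorem theorem1p2 (R : rcfType) (d n : nat) (hd : (1 <= d)%N) (hn : (2 <= n)%N) :
  exists C : R, 0 < C /\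
  forall (F : finFieldType), odd #|F| ->
  forall (As Bs : 'I_d -> {set 'M[F]_n}) (Es Fs : {set 'M[F]_n}),
    let q : R := (#|F|)%:R in
    let P : nat := (#|Es| * #|Fs| * \prod_(i < d) (#|As i| * #|Bs i|))%N in
    `| (count_sol As Bs Es Fs)%:R - P%:R / q ^+ (n * n) |
      <= C * (Num.sqrt q ^+ (2 * d * (n * n)) / Num.sqrt q ^+ ((d - 1) * n + 1))
           * Num.sqrt (P%:R).
Proof.
exists 1; split => // F _ As Bs Es Fs; cbv zeta.
set q : R := (#|F|)%:R.
set P := (#|Es| * #|Fs| * \prod_(i < d) (#|As i| * #|Bs i|))%N.
have [psi [psiD psi0 psiN1 [a0 psia0]]] := exists_char F.
have H := @core F psi psiD psi0 psiN1 a0 psia0 n d As Bs Es Fs P erefl.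
rewrite -natrM -natrX -natrM in H.
have {}H := @transfer _ R _ _ _ _ H.
set N := count_sol As Bs Es Fs in H *.
rewrite [(_ * N)%:R]natrM [(P * _)%:R]natrM !natrX -/q in H.
have q1 : 1 < q by rewrite /q ltr1n finNzRing_gt1.
have q0 : 0 < q by apply: lt_trans q1.
set Q := q ^+ (n * n) in H *.
have Q0 : 0 < Q by rewrite exprn_gt0.
set k := ((d - 1) * n + 1)%N.
have kle : (k <= n * d)%N by rewrite /k; nia.
have qk : q ^+ k <= (q ^+ n) ^+ d by rewrite -exprM ler_eXn2l.
have key : (Q * N%:R - P%:R) ^+ 2 * q ^+ k <= P%:R * Q ^+ (2 * d + 2).
  apply: (le_trans _ H); rewrite ler_wpM2l //; exact: sqr_ge0.
set s := Num.sqrt q.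
have hs2 : s ^+ 2 = q by rewrite sqr_sqrtr ?ltW.
have hsa : (s ^+ (2 * d * (n * n))) ^+ 2 = Q ^+ (2 * d).
  by rewrite -exprM (mulnC _ 2) exprM hs2 /Q -exprM; congr (_ ^+ _); lia.
have hsk : (s ^+ k) ^+ 2 = q ^+ k by rewrite -exprM (mulnC _ 2) exprM hs2.
have hsP : Num.sqrt (P%:R : R) ^+ 2 = P%:R by rewrite sqr_sqrtr ?ler0n.
rewrite mul1r -ler_sqr ?nnegrE ?normr_ge0 //; last first.
  by rewrite mulr_ge0 ?divr_ge0 ?exprn_ge0 ?sqrtr_ge0.
rewrite real_normK ?num_real // !exprMn exprVn hsa hsk hsP.
have -> : N%:R - P%:R / Q = (Q * N%:R - P%:R) / Q.
  by field; rewrite gt_eqF.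
rewrite expr_div_n ler_pdivrMr ?exprn_gt0 //.
rewrite (_ : Q ^+ (2 * d) / q ^+ k * P%:R * Q ^+ 2 = P%:R * Q ^+ (2 * d + 2) / q ^+ k).
  by rewrite ler_pdivlMr ?exprn_gt0.
by rewrite exprD; field; rewrite expf_neq0 // gt_eqF.
Qed.
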